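(* For every integer $p\ge 1$ and every integer $n\ge p+2$, $$\sigma(K_{p,1,1},n)\;\ge\; 2\left\lfloor \frac{(p+1)(n-1)+2}{2}\right\rfloor .$$
   Context: A finite sequence $S=(d_1,\dots,d_n)$ of non-negative integers is graphical if it is the degree sequence of some simple graph on $n$ vertices (a realization of $S$). Write $\sigma(S)=d_1+\dots+d_n$. For a graph $H$, a graphical sequence $S$ is potentially $H$-graphical if some realization of $S$ contains $H$ as a subgraph. $K_{p,1,1}$ denotes the complete 3-partite graph with parts of sizes $p,1,1$. $\sigma(H,n)$ denotes the minimum even integer $l$ such that every $n$-term graphical sequence $S$ with $\sigma(S)\ge l$ is potentially $H$-graphical. $\lfloor x\rfloor$ is the largest integer $\le x$. *)

(* Defs.v *)
From mathcomp Require Import all_boot.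
Set Implicit Arguments. Unset Strict Implicit. Unset Printing Implicit Defensive.

Definition simple_graph (V : finType) (e : rel V) : Prop :=
  irreflexive e /\ symmetric e.

Definition deg (V : finType) (e : rel V) (v : V) : nat := #|[set w | e v w]|.

Definition seq_sum (n : nat) (S : 'I_n -> nat) : nat := \sum_(i < n) S i.

Definition realization (n : nat) (S : 'I_n -> nat) (e : rel 'I_n) : Prop :=
  simple_graph e /\ forall i, deg e i = S i.

Definition graphical (n : nat) (S : 'I_n -> nat) : Prop :=
  exists e : rel 'I_n, realization S e.

Definition contains_subgraph (V W : finType) (eG : rel V) (eH : rel W) : Prop :=
  exists f : W -> V, injective f /\ forall u v, eH u v -> eG (f u) (f v).

Definition potentially_graphical (W : finType) (eH : rel W)
    (n : nat) (S : 'I_n -> nat) : Prop :=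
  exists e : rel 'I_n, realization S e /\ contains_subgraph e eH.

(* K_{p,1,1} on vertices 'I_(p+2): parts {0..p-1}, {p}, {p+1}. *)
Definition K_p11 (p : nat) : rel 'I_(p + 2) :=
  fun i j => (i != j) && ~~ ((i < p) && (j < p)).

(* l is admissible for sigma(H,n): l is even and every n-term graphical
   sequence with sum >= l is potentially H-graphical.
   sigma(H,n) is the minimum admissible l. *)
Definition sigma_admissible (W : finType) (eH : rel W) (n l : nat) : Prop :=
  ~~ odd l /\
  forall S : 'I_n -> nat, graphical S -> l <= seq_sum S ->
    potentially_graphical eH S.
Arguments K_p11 p : clear implicits.

(* Main.v *)
Require Import Defs.
From mathcomp Require Import all_boot.
From mathcomp Require Import zify.
Ltac splitifs := repeat match goal with
 | |- context[if ?b then _ else _] => case: (boolP b) => ?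
 | H : context[if ?b then _ else _] |- _ => move: H; case: (boolP b) => ? H
 end.
Definition dist (i j : nat) := if i <= j then j - i else i - j.
Definition W m k (c:bool) i j : bool :=
  ((0 < dist i j) && ((dist i j <= k) || (m - k <= dist i j))) ||
  (c && ((i + (m - m./2) == j) || (j + (m - m./2) == i))).
Definition tt m (c : bool) i : bool := c && ((i < m./2) || (m - m./2 <= i)).
Definition Dn m k c i := 1 + (k + k) + tt m c i.
Definition G m k i x :=
  if x == 0 then 0 else if x <= k then (if i + x < m then i + x else i + x - m).+1
  else if x <= k + k then (if x - k <= i then i - (x - k) else i + m - (x - k)).+1
  else (if i < m./2 then i + (m - m./2) else i - (m - m./2)).+1.
Definition Ginv m k i j :=
  if (i < j) && (j - i <= k) then j - i else if (j < i) && (i - j <= k) then k + (i - j)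
  else if (i < j) && (m - (j - i) <= k) then k + (m - (j - i)) else if (j < i) && (m - (i - j) <= k) then m - (i - j) else k + k + 1.

Lemma G_ok m k (c : bool) i x : k + k + c + 2 <= m -> i < m -> x < Dn m k c i ->
  G m k i x <= m /\ G m k i x <> i.+1 /\ (G m k i x = 0 \/ W m k c i (G m k i x - 1)).
Proof.
move=> hm hi; rewrite /Dn /tt /G /W /dist; case: c hm => /= hm hx; splitifs; lia.
Qed.

Lemma G_inj m k (c : bool) i x y : k + k + c + 2 <= m -> i < m -> x < Dn m k c i ->
  y < Dn m k c i -> G m k i x = G m k i y -> x = y.
Proof.
move=> hm hi; rewrite /Dn /tt /G; case: c hm => /= hm hx hy; splitifs; lia.
Qed.

Lemma G_inv m k (c : bool) i j : k + k + c + 2 <= m -> i < m -> j < m -> W m k c i j ->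
  Ginv m k i j < Dn m k c i /\ G m k i (Ginv m k i j) = j.+1.
Proof.
move=> hm hi hj; rewrite /Dn /tt /G /W /dist /Ginv; case: c hm => /= hm hw; splitifs; lia.
Qed.
Lemma Wsym m k c i j : W m k c i j = W m k c j i.
Proof. rewrite /W /dist; apply/idP/idP; case: c; splitifs; lia. Qed.
Lemma G0 m k i : G m k i 0 = 0.
Proof. by []. Qed.
Lemma Dn_pos m k c i : 0 < Dn m k c i.
Proof. rewrite /Dn; lia. Qed.
Lemma Dn_le m k c i : Dn m k c i <= 1 + (k + k) + c.
Proof. rewrite /Dn /tt; case: c; lia. Qed.
Lemma Dn_ge m k (c : bool) i : Dn m k c i + (c && odd m && (i == m./2)) >= 1 + (k + k) + c.
Proof. rewrite /Dn /tt; case: c => /=; lia. Qed.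

Definition E m k c : rel 'I_m.+1 := fun a b =>
  (a != b) && [|| nat_of_ord a == 0, nat_of_ord b == 0 | W m k c (nat_of_ord a - 1) (nat_of_ord b - 1)].


Lemma E_simple m k c : simple_graph (E m k c).
Proof.
split; first by move=> a; rewrite /E eqxx.
move=> a b; rewrite /E eq_sym Wsym; congr (_ && _).
by case: (nat_of_ord a == 0); case: (nat_of_ord b == 0).
Qed.

Lemma deg0 m k c : deg (E m k c) ord0 = m.
Proof.
rewrite /deg.
have -> : [set w | E m k c ord0 w] = [set~ ord0].
  by apply/setP => w; rewrite !inE /E eqxx /= andbT eq_sym.
by rewrite cardsC1 card_ord.
Qed.

Lemma degpos m k (c : bool) (a : 'I_m.+1) : k + k + c + 2 <= m -> 0 < nat_of_ord a ->
  deg (E m k c) a = Dn m k c (nat_of_ord a - 1).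
Proof.
move=> hm ha; have hi : (nat_of_ord a - 1) < m by have := ltn_ord a; lia.
rewrite /deg.
have -> : [set w | E m k c a w] =
   [set (inord (G m k (nat_of_ord a - 1) (val x)) : 'I_m.+1) | x : 'I_(Dn m k c (nat_of_ord a - 1))].
  apply/setP => w; rewrite inE; apply/idP/imsetP.
  - rewrite /E => /andP [hne /or3P [h0|h0|hw]].
    + by move/eqP: h0 => h0; rewrite h0 in ha.
    + exists (Ordinal (Dn_pos m k c _)) => //; apply/val_inj.
      by rewrite /= G0 inordK //; apply/eqP.
    + case: (boolP (nat_of_ord w == 0)) => hw0.
        exists (Ordinal (Dn_pos m k c _)) => //; apply/val_inj.
        by rewrite /= G0 inordK //; apply/eqP.
      have hj : nat_of_ord w - 1 < m by have := ltn_ord w; lia.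
      have [hx hg] := G_inv _ _ _ _ _ hm hi hj hw.
      exists (Ordinal hx) => //; apply/val_inj.
      rewrite /= hg inordK; [lia | have := ltn_ord w; lia].
  - case=> x _ ->.
    have [h1 [h2 h3]] := G_ok _ _ _ _ _ hm hi (ltn_ord x).
    rewrite /E; apply/andP; split.
      apply/negP => /eqP /(congr1 (@nat_of_ord _)); rewrite /= inordK //; lia.
    case: h3 => [h3|h3]; apply/or3P; [apply: Or32 | apply: Or33]; rewrite inordK // ?h3 //.
rewrite card_imset ?card_ord //.
move=> x y /(congr1 (@nat_of_ord _)).
have [h1 [h2 h3]] := G_ok _ _ _ _ _ hm hi (ltn_ord x).
have [h1' [h2' h3']] := G_ok _ _ _ _ _ hm hi (ltn_ord y).
rewrite !inordK // => hxy; apply/val_inj; exact: (G_inj _ _ _ _ _ _ hm hi (ltn_ord x) (ltn_ord y) hxy).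
Qed.


Lemma sum_eq_ind m q : \sum_(i < m) ((nat_of_ord i) == q : nat) = (q < m).
Proof.
elim: m => [|m IH]; first by rewrite big_ord0.
rewrite big_ord_recr /= IH; lia.
Qed.

Lemma sum_ind_le m q (b : bool) : \sum_(i < m) (b && ((nat_of_ord i) == q) : nat) <= b.
Proof.
case: b => /=; first by rewrite sum_eq_ind; lia.
by rewrite big1.
Qed.

Lemma sumE m k (c : bool) : k + k + c + 2 <= m ->
  m + m * (1 + (k + k) + c) - c * odd m <= seq_sum (deg (E m k c)).
Proof.
move=> hm; rewrite /seq_sum big_ord_recl deg0.
have h : \sum_(i < m) deg (E m k c) (lift ord0 i) = \sum_(i < m) Dn m k c i.
  apply: eq_bigr => i _; by rewrite degpos //= /bump /= add1n subn1.
rewrite h.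
have h2 : \sum_(i < m) (1 + (k + k) + c) <=
          \sum_(i < m) (Dn m k c i + (c && odd m && ((nat_of_ord i) == m./2))).
  by apply: leq_sum => i _; apply: Dn_ge.
rewrite sum_nat_const card_ord big_split /= in h2.
have h3 := sum_ind_le m (m./2) (c && odd m).
move: h2 h3; set s1 := \sum_(i < m) Dn m k c i; set s2 := \sum_(i < m) _.
move=> h2 h3.
have hc : (c && odd m : nat) = c * odd m by case: (c); case: (odd m).
rewrite hc in h3.
lia.
Qed.

Lemma degle m k (c : bool) (a : 'I_m.+1) : k + k + c + 2 <= m -> 0 < nat_of_ord a ->
  deg (E m k c) a <= 1 + (k + k) + c.
Proof. move=> hm ha; rewrite degpos //; apply: Dn_le. Qed.

Theorem theorem1 (p n : nat) (hp : 1 <= p) (hn : p + 2 <= n) :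
  forall l : nat, sigma_admissible (K_p11 p) n l ->
    2 * (((p + 1) * (n - 1) + 2) %/ 2) <= l.
Proof.
move=> l [hev hadm]; rewrite leqNgt; apply/negP => hlt.
case: n hn hlt hadm => [|m] hn hlt hadm; first lia.
pose k := (p - 1)./2; pose c := odd (p - 1).
have hpk : p = 1 + (k + k) + c.
  have := odd_double_half (p - 1); rewrite /k /c -addnn; lia.
have hm : k + k + c + 2 <= m by lia.
pose S := deg (E m k c).
have hg : graphical S by exists (E m k c); split; [apply: E_simple | done].
have hsum := sumE _ _ _ hm.
have hl : l <= seq_sum S.
  have [hc|hc] : c = false \/ c = true by case: (c); auto.
    rewrite /S; rewrite hc in hsum hpk; rewrite hpk in hlt; move: hsum hlt hev; rewrite /= ?hc; lia.
  rewrite /S; rewrite hc in hsum hpk; rewrite hpk in hlt; move: hsum hlt hev; rewrite /= ?hc; lia.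
case: (hadm S hg hl) => e [[hs hdeg] [f [finj hf]]].
have big : forall v : 'I_(p + 2), p <= v -> p < deg e (f v).
  move=> v hv; rewrite /deg.
  have sub : f @: [set~ v] \subset [set w | e (f v) w].
    apply/subsetP => w /imsetP [u]; rewrite !inE => huv ->.
    apply: hf; rewrite /K_p11 eq_sym huv /=; apply/negP => /andP [h1 _]; lia.
  have := subset_leq_card sub; rewrite card_imset // cardsC1 card_ord; lia.
have small : forall a : 'I_m.+1, 0 < nat_of_ord a -> S a <= p.
  by move=> a ha; rewrite hpk; apply: degle.
have hx0 : p < p + 2 by lia.
have hx1 : p.+1 < p + 2 by lia.
have b0 := big (Ordinal hx0) (leqnn p).
have b1 := big (Ordinal hx1) (leqnSn p).
rewrite hdeg in b0; rewrite hdeg in b1.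
have hne : f (Ordinal hx0) != f (Ordinal hx1).
  apply/negP => /eqP /finj /(congr1 (@nat_of_ord _)) /=; lia.
case: (posnP (nat_of_ord (f (Ordinal hx0)))) => h0.
  have : 0 < nat_of_ord (f (Ordinal hx1)).
    rewrite lt0n; apply/negP => /eqP h1; move: hne.
    by rewrite -(inj_eq val_inj) /= h0 h1.
  move/small; lia.
have := small _ h0; lia.
Qed.
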